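(* Let $G$ be a finite simple graph, and let $C_1$, $C_2$, $C_3$ be nonempty connected induced subgraphs of $G$ such that for every $i\neq j$ the distance in $G$ between $C_i$ and $C_j$ is at least $2$. Let $k=\min\{\mathrm{lmw}(C_1),\mathrm{lmw}(C_2),\mathrm{lmw}(C_3)\}$. Suppose that for each pair $\{i,j\}\subseteq\{1,2,3\}$ with $i\neq j$, letting $l$ be the third index, there exists a path $P_{i,j}$ in $G$ from a vertex of $C_i$ to a vertex of $C_j$ that does not intersect the closed neighborhood $N_G[V(C_l)]$. Then $\mathrm{lmw}(G)>k$.
   Context: All graphs are finite and simple. For $S\subseteq V(G)$, $N_G[S]=\bigcup_{v\in S}(N_G(v)\cup\{v\})$. The distance between two subgraphs $H,H'$ of $G$ is the minimum distance in $G$ between a vertex of $H$ and a vertex of $H'$. For disjoint $S,T\subseteq V(G)$, $G[S,T]$ denotes the bipartite graph on $S\cup T$ whose edges are exactly the edges of $G$ with one endpoint in $S$ and the other in $T$. $\mathrm{mim}(H)$ is the maximum number of edges in an induced matching of $H$. A linear layout of an $n$-vertex graph $G$ is a bijection $\sigma:V(G)\to\{1,\dots,n\}$; write $v_i=\sigma^{-1}(i)$ and $V_i^\sigma=\{v_1,\dots,v_i\}$, $\overline{V_i^\sigma}=V(G)\setminus V_i^\sigma$. The MIM-width of $G$ under $\sigma$ is $\mathrm{mw}(\sigma,G)=\max_{1\le i<n}\mathrm{mim}(G[V_i^\sigma,\overline{V_i^\sigma}])$ (equal to $0$ if $n\le 1$). The linear MIM-width $\mathrm{lmw}(G)$ is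 the minimum of $\mathrm{mw}(\sigma,G)$ over all linear layouts $\sigma$ of $G$. *)

(* Defs.v *)
(* A finite simple graph is a symmetric irreflexive relation
   e on a finType T; an induced subgraph is given by its vertex set. *)
From mathcomp Require Import all_boot.
Set Implicit Arguments. Unset Strict Implicit. Unset Printing Implicit Defensive.

Section Graph.
Variables (T : finType) (e : rel T).

Definition closed_nbhd (S : {set T}) : {set T} :=
  [set v | (v \in S) || [exists u in S, e u v]].

Definition connected_in (S : {set T}) : Prop :=
  forall x y, x \in S -> y \in S ->
    connect [rel u v | [&& e u v, u \in S & v \in S]] x y.

Definition dist_ge2 (S1 S2 : {set T}) : Prop :=
  [disjoint S1 & S2] /\ forall x y, x \in S1 -> y \in S2 -> ~~ e x y.

Definition induced_matching (A B : {set T}) (M : {set T * T}) : bool :=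
  [forall p in M, [&& p.1 \in A, p.2 \in B & e p.1 p.2]] &&
  [forall p in M, forall q in M, (p != q) ==>
     [&& p.1 != q.1, p.2 != q.2, ~~ e p.1 q.2 & ~~ e q.1 p.2]].

Definition mim (A B : {set T}) : nat :=
  \max_(M : {set T * T} | induced_matching A B M) #|M|.

Definition mw (s : seq T) : nat :=
  \max_(1 <= i < size s) mim [set x in take i s] [set x in drop i s].

Definition layout (S : {set T}) (t : #|S|.-tuple T) : bool :=
  uniq t && all (fun x => x \in S) t.

(* linear MIM-width of G[S]; the initial value #|S| is an upper bound on
   mw of any layout and layouts always exist, so this is the true minimum *)
Definition lmw (S : {set T}) : nat :=
  \big[minn/#|S|]_(t : #|S|.-tuple T | @layout S t) mw t.

End Graph.

(* Main.v *)
Require Import Defs.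
From mathcomp Require Import all_boot.
From mathcomp Require Import zify.
Set Implicit Arguments. Unset Strict Implicit. Unset Printing Implicit Defensive.

Section Aux.
Variables (T : finType) (e : rel T).
Hypothesis e_sym : symmetric e.

Lemma cross (r : rel T) (L : pred T) x p :
  path r x p -> L x -> ~~ L (last x p) ->
  exists u v, [/\ r u v, L u, ~~ L v, u \in x :: p & v \in x :: p].
Proof.
elim: p x => [|y p IH] x /=; first by move=> _ ->.
move=> /andP[rxy py] Lx Llast.
case Ly: (L y).
- have [u [v [ruv Lu Lv up vp]]] := IH y py Ly Llast.
  by exists u, v; split => //; rewrite inE ?up ?vp orbT.
- by exists x, y; split => //; rewrite ?Ly // !inE eqxx ?orbT.
Qed.

Lemma cross2 (r : rel T) (L : pred T) x p : symmetric r ->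
  path r x p -> L x != L (last x p) ->
  exists u v, [/\ r u v, L u, ~~ L v, u \in x :: p & v \in x :: p].
Proof.
move=> rs pp.
case Lx: (L x); case Ll: (L (last x p)) => //= _.
- by apply: cross pp Lx _; rewrite Ll.
- have H : ~~ predC L (last x p) by rewrite /= Ll.
  have [u [v [ruv Lu Lv up vp]]] := cross (L := predC L) pp (negbT Lx) H.
  by exists v, u; split => //; [rewrite rs | exact: negbNE].
Qed.

Lemma cover (t : seq T) i v : v \in t -> v \notin take i t -> v \in drop i t.
Proof. by rewrite -{1}(cat_take_drop i t) mem_cat; case/orP=> [->|]. Qed.

Lemma drop_idx (t : seq T) i v : uniq t -> v \in drop i t -> i <= index v t.
Proof.
move=> ut vd.
have vt : v \in t by apply: mem_drop vd.
have : v \notin take i t.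
  move: ut; rewrite -{1}(cat_take_drop i t) cat_uniq => /and3P[_ /hasPn H _].
  exact: H.
by rewrite (in_take _ vt) -leqNgt.
Qed.

Lemma notin_nbhd (Y : {set T}) u : u \notin closed_nbhd e Y ->
  u \notin Y /\ forall w, w \in Y -> ~~ e w u.
Proof.
rewrite /closed_nbhd inE negb_or => /andP[uY /existsPn H]; split => // w wY.
by move: (H w); rewrite wY /=.
Qed.

Lemma dist_sym (A B : {set T}) : dist_ge2 e A B -> dist_ge2 e B A.
Proof.
case=> dAB H; split; first by rewrite disjoint_sym.
by move=> x y xB yA; rewrite e_sym; apply: H.
Qed.

Lemma dist_notN (A Y : {set T}) v : dist_ge2 e A Y -> v \in A -> v \notin closed_nbhd e Y.
Proof.
case=> dAY H vA; rewrite /closed_nbhd inE negb_or (disjointFr dAY vA) /=.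
apply/existsPn => w; apply/negP => /andP[wY ewv].
by move: (H v w vA wY); rewrite e_sym ewv.
Qed.

Lemma cut_bounds (t : seq T) i a b : a \in take i t -> b \in drop i t -> 0 < i < size t.
Proof.
case: i => [|i]; first by rewrite take0.
move=> _ Hb /=; rewrite ltnNge; apply/negP => H.
by rewrite drop_oversize in Hb.
Qed.

Lemma bigmax_ex (r : seq nat) (F : nat -> nat) k : 0 < k ->
  k <= \max_(i <- r) F i -> exists2 i, i \in r & k <= F i.
Proof.
move=> k0 H; apply/hasP; apply/negPn/negP => /hasPn Hn.
suff : \max_(i <- r) F i < k by rewrite ltnNge H.
rewrite big_seq; apply: (big_ind (fun m => m < k)) => //.
  by move=> a b; rewrite gtn_max => -> ->.
by move=> i /Hn; rewrite -ltnNge.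
Qed.

Lemma bigmax_ex_fin (I : finType) (P : pred I) (F : I -> nat) k : 0 < k ->
  k <= \max_(i | P i) F i -> exists i, P i && (k <= F i).
Proof.
move=> k0 H; case: (boolP [exists i, P i && (k <= F i)]) => [/existsP//|/existsPn Hn].
suff : \max_(i | P i) F i < k by rewrite ltnNge H.
apply: (big_ind (fun m => m < k)) => //.
  by move=> a b; rewrite gtn_max => -> ->.
by move=> i Pi; move: (Hn i); rewrite Pi /= -ltnNge.
Qed.

Lemma bigmin_le_seq (I : eqType) (r : seq I) (F : I -> nat) x i : i \in r ->
  \big[minn/x]_(j <- r) F j <= F i.
Proof.
elim: r => //= j r IH; rewrite big_cons inE => /orP[/eqP->|/IH H].
  exact: geq_minl.
exact: leq_trans (geq_minr _ _) H.
Qed.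

Lemma bigmin_le (I : finType) (P : pred I) (F : I -> nat) x i : P i ->
  \big[minn/x]_(j | P j) F j <= F i.
Proof.
move=> Pi; rewrite -big_filter; apply: bigmin_le_seq.
by rewrite mem_filter Pi mem_index_enum.
Qed.

Lemma lmw_le (S : {set T}) (t : #|S|.-tuple T) : @layout _ S t -> lmw e S <= mw e t.
Proof. by move=> H; apply: bigmin_le. Qed.

Lemma lmw_leS (S : {set T}) : lmw e S <= #|S|.
Proof.
by apply: (big_rec (fun m => m <= #|S|)) => // i m _ H; apply: leq_trans (geq_minr _ _) H.
Qed.

Lemma lmw_gt (S : {set T}) k : k < #|S| ->
  (forall t : #|S|.-tuple T, @layout _ S t -> k < mw e t) -> k < lmw e S.
Proof.
move=> H1 H2; apply: (big_ind (fun m => k < m)) => //.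
by move=> a b Ha Hb; rewrite leq_min Ha Hb.
Qed.

Lemma filter_cut (P : pred T) (t : seq T) j : j <= size (filter P t) ->
  exists i, take j (filter P t) = filter P (take i t) /\
            drop j (filter P t) = filter P (drop i t).
Proof.
elim: t j => [|x t IH] j.
  by move=> _; exists 0; case: j.
case: j => [|j] Hj.
  by exists 0; rewrite take0 drop0.
move: Hj; rewrite [filter P (x :: t)]/=.
case Px: (P x) => /= Hj.
- have [i [Ht Hd]] := IH j Hj.
  by exists i.+1; rewrite /= Px Ht Hd.
- have [i [Ht Hd]] := IH j.+1 Hj.
  by exists i.+1; rewrite /= Px Ht Hd.
Qed.

Lemma im_mono (A B A' B' : {set T}) M : induced_matching e A B M ->
  A \subset A' -> B \subset B' -> induced_matching e A' B' M.
Proof.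
move=> /andP[/forallP H1 H2] /subsetP sA /subsetP sB; rewrite /induced_matching H2 andbT.
apply/forallP => q; apply/implyP => qM.
by move: (H1 q); rewrite qM /= => /and3P[qa qb ->]; rewrite sA ?sB.
Qed.

End Aux.

Section Aux2.
Variables (T : finType) (e : rel T).
Hypothesis e_sym : symmetric e.

Lemma fin (t : seq T) (Y : {set T}) i (M : {set T*T}) u v :
  0 < i < size t ->
  induced_matching e [set x in take i t] [set x in drop i t] M ->
  (forall q, q \in M -> q.1 \in Y /\ q.2 \in Y) ->
  e u v -> u \in take i t -> v \in drop i t ->
  u \notin closed_nbhd e Y -> v \notin closed_nbhd e Y ->
  #|M| < mw e t.
Proof.
move=> ib IM MY euv ut vd /notin_nbhd[uY uN] /notin_nbhd[vY vN].
have uvM : (u, v) \notin M by apply/negP => /MY [/= uY' _]; rewrite uY' in uY.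
have IM' : induced_matching e [set x in take i t] [set x in drop i t] ((u, v) |: M).
  move: IM => /andP[/forallP H1 /forallP H2]; apply/andP; split.
    apply/forallP => q; apply/implyP; rewrite in_setU1 => /orP[/eqP-> /=|qM].
      by rewrite !inE ut vd euv.
    by move: (H1 q); rewrite qM.
  apply/forallP => q; apply/implyP; rewrite in_setU1 => /orP[/eqP->|qM];
  apply/forallP => q'; apply/implyP; rewrite in_setU1 => /orP[/eqP->|q'M].
  - by rewrite eqxx.
  - have [q1Y q2Y] := MY _ q'M.
    apply/implyP => _ /=.
    apply/and4P; split.
    + by apply/eqP => E; move: uY; rewrite E q1Y.
    + by apply/eqP => E; move: vY; rewrite E q2Y.
    + by rewrite e_sym; apply: uN.
    + exact: vN.
  - have [q1Y q2Y] := MY _ qM.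
    apply/implyP => _ /=.
    apply/and4P; split.
    + by apply/eqP => E; move: uY; rewrite -E q1Y.
    + by apply/eqP => E; move: vY; rewrite -E q2Y.
    + exact: vN.
    + by rewrite e_sym; apply: uN.
  - by move: (H2 q); rewrite qM => /forallP /(_ q'); rewrite q'M.
have H1 := leq_bigmax_cond (F := fun M : {set T * T} => #|M|) (P := induced_matching e [set x in take i t] [set x in drop i t]) _ IM'.
rewrite cardsU1 uvM /= in H1.
apply: leq_trans H1 _.
rewrite /mw.
apply: (leq_bigmax_seq (F := fun i => mim e [set x in take i t] [set x in drop i t])) => //.
by rewrite mem_index_iota.
Qed.

End Aux2.

Section Aux3.
Variables (T : finType) (e : rel T).
Hypothesis e_sym : symmetric e.

Lemma left_iff (t : seq T) i v : uniq t -> (forall v, v \in t) ->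
  (v \in take i t) = (index v t < i).
Proof. by move=> _ allt; rewrite (in_take _ (allt v)). Qed.

Lemma right_idx (t : seq T) i v : uniq t -> (forall v, v \in t) ->
  (v \in drop i t) = (i <= index v t).
Proof.
move=> ut allt; apply/idP/idP; first exact: drop_idx.
by move=> H; apply: cover => //; rewrite (in_take _ (allt v)) -leqNgt.
Qed.

Lemma core (t : seq T) (X Y Z : {set T}) iX iY iZ (M : {set T*T}) aX bX aZ bZ x y p :
  uniq t -> (forall v, v \in t) ->
  0 < iY < size t ->
  induced_matching e [set x in take iY t] [set x in drop iY t] M ->
  (forall q, q \in M -> q.1 \in Y /\ q.2 \in Y) ->
  connected_in e X -> connected_in e Z ->
  dist_ge2 e X Y -> dist_ge2 e Y Z ->
  x \in X -> y \in Z -> path e x p -> last x p = y ->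
  all (fun v => v \notin closed_nbhd e Y) (x :: p) ->
  aX \in X -> aX \in take iX t -> bX \in X -> bX \in drop iX t ->
  aZ \in Z -> aZ \in take iZ t -> bZ \in Z -> bZ \in drop iZ t ->
  (iX <= iY <= iZ) \/ (iZ <= iY <= iX) ->
  #|M| < mw e t.
Proof.
move=> ut allt ib IM MY cX cZ dXY dYZ xX yZ px lxy pN aXX aXt bXX bXt aZZ aZt bZZ bZt ord.
pose D := [pred v | (v \in X) || (v \in Z) || (v \in x :: p)].
pose rD := [rel u v | [&& e u v, D u & D v]].
have rDs : symmetric rD.
  by move=> u v; rewrite /= e_sym; congr (_ && _); exact: andbC.
have notN : forall v, D v -> v \notin closed_nbhd e Y.
  move=> v /orP[/orP[vX|vZ]|vp].
  - exact: dist_notN dXY vX.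
  - exact: dist_notN (dist_sym e_sym dYZ) vZ.
  - exact: (allP pN) v vp.
have prD : path rD x p.
  apply: (sub_in_path (P := D)); last exact: px.
    by move=> u v uD vD euv; rewrite /= euv; move: uD vD; rewrite !inE => -> ->.
  by apply/allP => v vp; rewrite /= vp !orbT.
have cxy : connect rD x y.
  by apply/connectP; exists p => //; rewrite lxy.
have cx : forall a, D a -> connect rD x a.
  move=> a /orP[/orP[haX|haZ]|ap].
  - apply: (connect_sub _ (cX x a xX haX)).
    move=> u v /and3P[euv uX vX]; apply: connect1.
    by rewrite /= euv /= uX vX.
  - apply: (connect_trans cxy).
    apply: (connect_sub _ (cZ y a yZ haZ)).
    move=> u v /and3P[euv uX vX]; apply: connect1.
    by rewrite /= euv /= uX vX !orbT.
  - exact: path_connect prD a ap.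
have connD : forall a b, D a -> D b -> connect rD a b.
  move=> a b Da Db; apply: connect_trans (cx b Db).
  by rewrite (sym_connect_sym rDs); apply: cx.
have [l [r [Dl Dr lL rR]]] : exists l r, [/\ D l, D r, l \in take iY t & r \in drop iY t].
  move: aXt bXt aZt bZt.
  rewrite !(left_iff _ _ ut allt) !(right_idx _ _ ut allt) => aXt bXt aZt bZt.
  case: ord => /andP[o1 o2].
  - exists aX, bZ; split; rewrite /= ?aXX ?bZZ ?orbT //.
      by rewrite (left_iff _ _ ut allt); exact: leq_trans aXt o1.
    by rewrite (right_idx _ _ ut allt); exact: leq_trans o2 bZt.
  - exists aZ, bX; split; rewrite /= ?aZZ ?bXX ?orbT //.
      by rewrite (left_iff _ _ ut allt); exact: leq_trans aZt o1.
    by rewrite (right_idx _ _ ut allt); exact: leq_trans o2 bXt.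
have /connectP [q pq rq] := connD l r Dl Dr.
have Lneq : (l \in take iY t) != (last l q \in take iY t).
  rewrite -rq lL (left_iff _ _ ut allt) -leqNgt.
  by rewrite -(right_idx _ _ ut allt).
have [u [v [ruv Lu Lv _ _]]] := cross2 (L := fun w => w \in take iY t) rDs pq Lneq.
move: ruv => /and3P[euv Du Dv].
apply: (fin e_sym ib IM MY euv Lu) => //.
- exact: cover.
- exact: notN.
- exact: notN.
Qed.

End Aux3.

Section Aux4.
Variables (T : finType) (e : rel T).

Lemma extract (t : seq T) (C : {set T}) k :
  uniq t -> (forall v, v \in t) -> 0 < k -> k <= lmw e C ->
  exists i (M : {set T*T}) a b,
   [/\ 0 < i < size t, induced_matching e [set x in take i t] [set x in drop i t] M,
       k <= #|M|, (forall q, q \in M -> q.1 \in C /\ q.2 \in C) &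
       [/\ a \in C, a \in take i t, b \in C & b \in drop i t]].
Proof.
move=> ut allt k0 kC.
pose f := [seq x <- t | x \in C].
have hf : size f == #|C|.
  have /card_uniqP <- : uniq f := filter_uniq _ ut.
  by apply/eqP; apply: eq_card => v; rewrite mem_filter allt andbT.
pose tf := Tuple hf.
have lay : @layout _ C tf by rewrite /layout filter_uniq //= filter_all.
have kf : k <= mw e f := leq_trans kC (lmw_le e lay).
have [j] := bigmax_ex (F := fun j => mim e [set x in take j f] [set x in drop j f]) k0 kf.
rewrite mem_index_iota => /andP[j1 j2] kj.
have [M /andP[IM kM]] := bigmax_ex_fin k0 kj.
have [i [Ht Hd]] := filter_cut (P := fun x => x \in C) (ltnW j2).
have sA : [set x in take j f] \subset [set x in take i t].
  by apply/subsetP => v; rewrite !inE Ht mem_filter => /andP[].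
have sB : [set x in drop j f] \subset [set x in drop i t].
  by apply/subsetP => v; rewrite !inE Hd mem_filter => /andP[].
have IM' := im_mono IM sA sB.
have MC : forall q, q \in M -> q.1 \in C /\ q.2 \in C.
  move=> q qM; move: IM => /andP[/forallP H _]; move: (H q).
  rewrite qM /= !inE Ht Hd !mem_filter.
  by case/and3P => /andP[-> _] /andP[-> _].
have [q qM] : exists q, q \in M.
  by apply/set0Pn; rewrite -card_gt0; exact: leq_trans k0 kM.
move: (IM') => /andP[/forallP H _]; move: (H q); rewrite qM /= !inE => /and3P[qa qb _].
have [q1C q2C] := MC q qM.
by exists i, M, q.1, q.2; split => //; exact: cut_bounds qa qb.
Qed.

End Aux4.

Theorem lemma3 (T : finType) (e : rel T)
  (e_sym : symmetric e) (e_irr : irreflexive e)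
  (C1 C2 C3 : {set T})
  (ne1 : C1 != set0) (ne2 : C2 != set0) (ne3 : C3 != set0)
  (con1 : connected_in e C1) (con2 : connected_in e C2) (con3 : connected_in e C3)
  (d12 : dist_ge2 e C1 C2) (d13 : dist_ge2 e C1 C3) (d23 : dist_ge2 e C2 C3)
  (P12 : exists x y (p : seq T), [/\ x \in C1, y \in C2, path e x p && uniq (x :: p),
            last x p = y &
            all (fun v => v \notin closed_nbhd e C3) (x :: p)])
  (P13 : exists x y (p : seq T), [/\ x \in C1, y \in C3, path e x p && uniq (x :: p),
            last x p = y &
            all (fun v => v \notin closed_nbhd e C2) (x :: p)])
  (P23 : exists x y (p : seq T), [/\ x \in C2, y \in C3, path e x p && uniq (x :: p),
            last x p = y &
            all (fun v => v \notin closed_nbhd e C1) (x :: p)]) :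
  minn (lmw e C1) (minn (lmw e C2) (lmw e C3)) < lmw e [set: T].
Proof.
set k := minn _ _.
have k1 : k <= lmw e C1 := geq_minl _ _.
have k2 : k <= lmw e C2 := leq_trans (geq_minr _ _) (geq_minl _ _).
have k3 : k <= lmw e C3 := leq_trans (geq_minr _ _) (geq_minr _ _).
apply: lmw_gt.
  apply: leq_ltn_trans (leq_trans k1 (lmw_leS e C1)) _.
  apply: proper_card; rewrite properT; apply/negP => /eqP E.
  case/set0Pn: ne2 => y yC2; case: d12 => dj _.
  by move: (disjointFl dj yC2); rewrite E inE.
move=> t /andP[ut _].
have allt : forall v, v \in t.
  have /card_uniqP ct := ut.
  have /subset_cardP H : #|t| = #|predT : pred T|.
    by rewrite ct size_tuple cardsT.
  have E : t =i predT by apply: H; apply/subsetP.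
  by move=> v; rewrite E.
case: (posnP k) => [k0|kpos].
  rewrite k0.
  have [x [y [p [xC yC /andP[px _] lxy _]]]] := P12.
  have xy : x != y.
    by apply/eqP => E; case: d12 => dj _; move: (disjointFl dj yC); rewrite -E xC.
  have ixy : index x t != index y t.
    by apply: contra xy => /eqP E; apply/eqP; apply: (index_inj x (allt x) (allt y)).
  pose i := (minn (index x t) (index y t)).+1.
  have Lneq : (x \in take i t) != (last x p \in take i t).
    rewrite lxy !(left_iff _ _ ut allt) /i.
    have [h|h] : index x t < index y t \/ index y t < index x t.
      by move: ixy; rewrite neq_ltn => /orP.
    - by rewrite (elimT minn_idPl (ltnW h)) ltnSn ltnS leqNgt h.
    - by rewrite (elimT minn_idPr (ltnW h)) ltnSn ltnS leqNgt h.
  have [u [v [euv Lu Lv _ _]]] := cross2 (r := e) e_sym px Lneq.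
  have vd := cover (allt v) Lv.
  have IM0 : induced_matching e [set x in take i t] [set x in drop i t] set0.
    by rewrite /induced_matching; apply/andP; split; apply/forallP => q; rewrite in_set0.
  have N0 : forall w, w \notin closed_nbhd e set0.
    by move=> w; rewrite /closed_nbhd inE in_set0 /=; apply/existsPn => w'; rewrite in_set0.
  have := fin e_sym (cut_bounds Lu vd) IM0 (Y := set0) _ euv Lu vd (N0 u) (N0 v).
  rewrite cards0; apply => q; by rewrite in_set0.
have [i1 [M1 [a1 [b1 [ib1 IM1 kM1 MC1 [a1C a1t b1C b1t]]]]]] := extract ut allt kpos k1.
have [i2 [M2 [a2 [b2 [ib2 IM2 kM2 MC2 [a2C a2t b2C b2t]]]]]] := extract ut allt kpos k2.
have [i3 [M3 [a3 [b3 [ib3 IM3 kM3 MC3 [a3C a3t b3C b3t]]]]]] := extract ut allt kpos k3.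
have : [\/ (i1 <= i2 <= i3) \/ (i3 <= i2 <= i1), (i2 <= i1 <= i3) \/ (i3 <= i1 <= i2) |
         (i1 <= i3 <= i2) \/ (i2 <= i3 <= i1)].
  case: (leqP i1 i2) => h12; case: (leqP i2 i3) => h23; case: (leqP i1 i3) => h13;
  rewrite ?h12 ?h23 ?h13 /=.
  all: try by constructor 1; (left + right); rewrite ?h12 ?h23 ?h13 ?(ltnW h12) ?(ltnW h23) ?(ltnW h13).
  all: try by constructor 2; (left + right); rewrite ?h12 ?h23 ?h13 ?(ltnW h12) ?(ltnW h23) ?(ltnW h13).
  all: try by constructor 3; (left + right); rewrite ?h12 ?h23 ?h13 ?(ltnW h12) ?(ltnW h23) ?(ltnW h13).
case=> o.
- have [x [y [p [xC yC /andP[px _] lxy pN]]]] := P13.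
  exact: leq_ltn_trans kM2 (core e_sym ut allt ib2 IM2 MC2 con1 con3 d12 d23 xC yC px lxy pN
           a1C a1t b1C b1t a3C a3t b3C b3t o).
- have [x [y [p [xC yC /andP[px _] lxy pN]]]] := P23.
  exact: leq_ltn_trans kM1 (core e_sym ut allt ib1 IM1 MC1 con2 con3 (dist_sym e_sym d12) d13
           xC yC px lxy pN a2C a2t b2C b2t a3C a3t b3C b3t o).
- have [x [y [p [xC yC /andP[px _] lxy pN]]]] := P12.
  exact: leq_ltn_trans kM3 (core e_sym ut allt ib3 IM3 MC3 con1 con2 d13 (dist_sym e_sym d23)
           xC yC px lxy pN a1C a1t b1C b1t a2C a2t b2C b2t o).
Qed.
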